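(* For prefixes $p,p',p''$, whenever both sides are defined (via the concatenation relation, which is a partial function), $p \cdot (p' \cdot p'') = (p \cdot p') \cdot p''$.
   Context: Prefixes are generated by $p ::= \mathtt{oneEmp} \mid \mathtt{oneFull} \mid \mathtt{epsEmp} \mid \mathtt{par}(p,p') \mid \mathtt{catA}(p) \mid \mathtt{catB}(p,p') \mid \mathtt{sumEmp} \mid \mathtt{inl}(p) \mid \mathtt{inr}(p) \mid \mathtt{starEmp} \mid \mathtt{starDone} \mid \mathtt{stA}(p) \mid \mathtt{stB}(p,p')$. The prefixes of type $1$ are exactly $\mathtt{oneEmp}$ and $\mathtt{oneFull}$. Prefix concatenation $p\cdot p'\sim p''$ (inductive): $\mathtt{epsEmp}\cdot\mathtt{epsEmp}\sim\mathtt{epsEmp}$; $\mathtt{oneEmp}\cdot p\sim p$ whenever $p$ is a prefix of type $1$; $\mathtt{oneFull}\cdot\mathtt{epsEmp}\sim\mathtt{oneFull}$; $\mathtt{par}(p_1,p_2)\cdot\mathtt{par}(p_1',p_2')\sim\mathtt{par}(p_1'',p_2'')$ if $p_i\cdot p_i'\sim p_i''$ for $i=1,2$; $\mathtt{catA}(p)\cdot\mathtt{catA}(p')\sim\mathtt{catA}(p'')$ if $p\cdot p'\sim p''$; $\mathtt{catA}(p)\cdot\mathtt{catB}(p',q)\sim\mathtt{catB}(p'',q)$ if $p\cdot p'\sim p''$; $\mathtt{catB}(p,p')\cdot p''\sim\mathtt{catB}(p,p''')$ if $p'\cdot p''\sim p'''$; $\mathtt{sumEmp}\cdot p\sim p$;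 $\mathtt{inl}(p)\cdot p'\sim\mathtt{inl}(p'')$ if $p\cdot p'\sim p''$; $\mathtt{inr}(p)\cdot p'\sim\mathtt{inr}(p'')$ if $p\cdot p'\sim p''$; $\mathtt{starEmp}\cdot p\sim p$; $\mathtt{starDone}\cdot\mathtt{epsEmp}\sim\mathtt{starDone}$; $\mathtt{stA}(p)\cdot\mathtt{catA}(p')\sim\mathtt{stA}(p'')$ if $p\cdot p'\sim p''$; $\mathtt{stA}(p)\cdot\mathtt{catB}(p',q)\sim\mathtt{stB}(p'',q)$ if $p\cdot p'\sim p''$; $\mathtt{stB}(p,p')\cdot p''\sim\mathtt{stB}(p,p''')$ if $p'\cdot p''\sim p'''$. We write $p\cdot p'$ for the unique $p''$ with $p\cdot p'\sim p''$ when it exists. *)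

(* Defs.v *)
Inductive prefix : Type :=
| oneEmp : prefix
| oneFull : prefix
| epsEmp : prefix
| par : prefix -> prefix -> prefix
| catA : prefix -> prefix
| catB : prefix -> prefix -> prefix
| sumEmp : prefix
| inl : prefix -> prefix
| inr : prefix -> prefix
| starEmp : prefix
| starDone : prefix
| stA : prefix -> prefix
| stB : prefix -> prefix -> prefix.

Inductive prefix_of_one : prefix -> Prop :=
| one_emp : prefix_of_one oneEmp
| one_full : prefix_of_one oneFull.

(* concat p p' p''  means  p . p' ~ p'' *)
Inductive concat : prefix -> prefix -> prefix -> Prop :=
| c_eps : concat epsEmp epsEmp epsEmp
| c_oneEmp : forall p, prefix_of_one p -> concat oneEmp p p
| c_oneFull : concat oneFull epsEmp oneFull
| c_par : forall p1 p2 p1' p2' p1'' p2'',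
    concat p1 p1' p1'' -> concat p2 p2' p2'' ->
    concat (par p1 p2) (par p1' p2') (par p1'' p2'')
| c_catAA : forall p p' p'', concat p p' p'' -> concat (catA p) (catA p') (catA p'')
| c_catAB : forall p p' p'' q, concat p p' p'' -> concat (catA p) (catB p' q) (catB p'' q)
| c_catB : forall p p' p'' p''', concat p' p'' p''' -> concat (catB p p') p'' (catB p p''')
| c_sumEmp : forall p, concat sumEmp p p
| c_inl : forall p p' p'', concat p p' p'' -> concat (inl p) p' (inl p'')
| c_inr : forall p p' p'', concat p p' p'' -> concat (inr p) p' (inr p'')
| c_starEmp : forall p, concat starEmp p p
| c_starDone : concat starDone epsEmp starDone
| c_stAA : forall p p' p'', concat p p' p'' -> concat (stA p) (catA p') (stA p'')
| c_stAB : forall p p' p'' q, concat p p' p'' -> concat (stA p) (catB p' q) (stB p'' q)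
| c_stB : forall p p' p'' p''', concat p' p'' p''' -> concat (stB p p') p'' (stB p p''').

(* Main.v *)
Require Import Defs.

Lemma concat_det : forall p p' r, concat p p' r -> forall r', concat p p' r' -> r = r'.
Proof.
  induction 1; intros r' H'; inversion H'; subst; try reflexivity;
  repeat match goal with
  | IH : forall r', concat ?a ?b r' -> _ = r', Hc : concat ?a ?b _ |- _ =>
      apply IH in Hc; subst
  end; reflexivity.
Qed.

Lemma concat_assoc_ex : forall p p' s, concat p p' s ->
  forall p'' t, concat s p'' t -> exists q, concat p' p'' q /\ concat p q t.
Proof.
  induction 1; intros p0 t0 Ht.
  - inversion Ht; subst. exists epsEmp; split; constructor.
  - exists t0; split; [exact Ht|]. constructor.
    inversion H; subst; inversion Ht; subst; auto; constructor.
  - inversion Ht; subst. exists epsEmp; split; constructor.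
  - inversion Ht; subst.
    match goal with Hx : concat _ _ _ |- _ => destruct (IHconcat1 _ _ Hx) as [q1 [A1 B1]]; clear Hx end.
    match goal with Hx : concat _ _ _ |- _ => destruct (IHconcat2 _ _ Hx) as [q2 [A2 B2]]; clear Hx end.
    exists (par q1 q2); split; constructor; auto.
  - inversion Ht; subst.
    + match goal with Hx : concat _ _ _ |- _ => destruct (IHconcat _ _ Hx) as [q1 [A1 B1]]; clear Hx end.
      exists (catA q1); split; constructor; auto.
    + match goal with Hx : concat _ _ _ |- _ => destruct (IHconcat _ _ Hx) as [q1 [A1 B1]]; clear Hx end.
      exists (catB q1 q); split; constructor; auto.
  - inversion Ht; subst.
    exists (catB p' p'''); split; constructor; auto.
  - inversion Ht; subst.
    match goal with Hx : concat _ _ _ |- _ => destruct (IHconcat _ _ Hx) as [q1 [A1 B1]]; clear Hx end.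
    exists q1; split; [auto| constructor; auto].
  - exists t0; split; [auto|constructor].
  - inversion Ht; subst.
    match goal with Hx : concat _ _ _ |- _ => destruct (IHconcat _ _ Hx) as [q1 [A1 B1]]; clear Hx end.
    exists q1; split; [auto| constructor; auto].
  - inversion Ht; subst.
    match goal with Hx : concat _ _ _ |- _ => destruct (IHconcat _ _ Hx) as [q1 [A1 B1]]; clear Hx end.
    exists q1; split; [auto| constructor; auto].
  - exists t0; split; [auto|constructor].
  - inversion Ht; subst. exists epsEmp; split; constructor.
  - inversion Ht; subst.
    + match goal with Hx : concat _ _ _ |- _ => destruct (IHconcat _ _ Hx) as [q1 [A1 B1]]; clear Hx end.
      exists (catA q1); split; constructor; auto.
    + match goal with Hx : concat _ _ _ |- _ => destruct (IHconcat _ _ Hx) as [q1 [A1 B1]]; clear Hx end.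
      exists (catB q1 q); split; constructor; auto.
  - inversion Ht; subst.
    exists (catB p' p'''); split; constructor; auto.
  - inversion Ht; subst.
    match goal with Hx : concat _ _ _ |- _ => destruct (IHconcat _ _ Hx) as [q1 [A1 B1]]; clear Hx end.
    exists q1; split; [auto| constructor; auto].
Qed.

Theorem mainTheorem9 : forall (p p' p'' q r s t : prefix),
  concat p' p'' q -> concat p q r ->
  concat p p' s -> concat s p'' t ->
  r = t.
Proof.
  intros p p' p'' q r s t H1 H2 H3 H4.
  destruct (concat_assoc_ex _ _ _ H3 _ _ H4) as [q1 [A B]].
  pose proof (concat_det _ _ _ H1 _ A); subst.
  exact (concat_det _ _ _ H2 _ B).
Qed.
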